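(* Let $k\ge 2$ be an integer and let $q=p^r$ be a prime power with $p>k$. If $A\subset\mathbb{F}_q^n$ has size \[ |A|>(k+1)\cdot\binom{n+(k-1)q}{(k-1)(q-1)}, \] then $A$ contains a $k$-right corner.
   Context: $\mathbb{F}_q^n$ carries the standard bilinear form $\langle u,v\rangle=\sum_{i=1}^n u_iv_i$. Vectors $x_1,\dots,x_k,x_{k+1}\in\mathbb{F}_q^n$ form a $k$-right corner if they are pairwise distinct and the $k$ vectors $x_1-x_{k+1},\dots,x_k-x_{k+1}$ are mutually orthogonal, i.e. $\langle x_i-x_{k+1},x_j-x_{k+1}\rangle=0$ for all $1\le i<j\le k$. *)

(* Defs.v *)
From HB Require Import structures.
From mathcomp Require Import all_boot all_order all_algebra all_field.
Set Implicit Arguments. Unset Strict Implicit. Unset Printing Implicit Defensive.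
Import GRing.Theory.
Local Open Scope ring_scope.

Definition dotv (F : fieldType) (n : nat) (u v : 'rV[F]_n) : F :=
  \sum_(i < n) u 0 i * v 0 i.

(* x : 'I_(k+1) -> F^n; x (widen i) for i < k are x_1..x_k, x ord_max is x_{k+1}.
   A k-right corner: pairwise distinct, and the x_i - x_{k+1} (i <= k) are
   mutually orthogonal. *)
Definition right_corner (F : fieldType) (n k : nat) (x : 'I_k.+1 -> 'rV[F]_n) : Prop :=
  injective x /\
  forall i j : 'I_k, i != j ->
    dotv (x (widen_ord (leqnSn k) i) - x ord_max)
         (x (widen_ord (leqnSn k) j) - x ord_max) = 0.

(* Main.v *)
Require Import Defs.
From HB Require Import structures.
From mathcomp Require Import all_boot all_order all_algebra all_field zify.
From Stdlib Require Import Classical ClassicalEpsilon.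
Set Implicit Arguments. Unset Strict Implicit. Unset Printing Implicit Defensive.
Import GRing.Theory.
Local Open Scope ring_scope.

Section Poly.
Variables (F : finFieldType) (n : nat).

Definition hat (y : 'rV[F]_n) (l : 'I_n.+1) : F :=
  if unlift ord_max l is Some i then y 0 i else 1.
Definition mon (s : seq 'I_n.+1) (y : 'rV[F]_n) : F := \prod_(l <- s) hat y l.
Definition homf (d : nat) (g : 'rV[F]_n -> F) :=
  exists L : seq (F * seq 'I_n.+1), all (fun cs => size cs.2 == d) L /\
    forall y, g y = \sum_(cs <- L) cs.1 * mon cs.2 y.

Lemma homf_ext d g h : (forall y, g y = h y) -> homf d g -> homf d h.
Proof. by move=> e [L [HL HE]]; exists L; split=> // y; rewrite -e. Qed.

Lemma homf_add d g h : homf d g -> homf d h -> homf d (fun y => g y + h y).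
Proof.
move=> [L1 [H1 E1]] [L2 [H2 E2]]; exists (L1 ++ L2); split.
  by rewrite all_cat H1 H2.
by move=> y; rewrite big_cat /= E1 E2.
Qed.

Lemma homf_scale d g c : homf d g -> homf d (fun y => c * g y).
Proof.
move=> [L [H E]]; exists [seq (c * cs.1, cs.2) | cs <- L]; split.
  by rewrite all_map.
by move=> y; rewrite big_map E mulr_sumr; apply: eq_bigr => cs _ /=; rewrite mulrA.
Qed.

Lemma homf_mul d1 d2 g h : homf d1 g -> homf d2 h ->
  homf (d1 + d2) (fun y => g y * h y).
Proof.
move=> [L1 [H1 E1]] [L2 [H2 E2]].
exists [seq (a.1 * b.1, a.2 ++ b.2) | a <- L1, b <- L2]; split.
  apply/allP => cs /allpairsP [[a b] [ha hb ->]] /=.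
  by rewrite size_cat (eqP (allP H1 _ ha)) (eqP (allP H2 _ hb)).
move=> y; rewrite E1 E2 big_distrlr /=.
rewrite big_allpairs_dep /=.
apply: eq_bigr => a _; apply: eq_bigr => b _.
by rewrite /mon big_cat /= mulrACA.
Qed.

Lemma homf_one0 : homf 0 (fun _ => 1).
Proof.
exists [:: (1, [::])]; split => // y.
by rewrite big_seq1 /mon big_nil mulr1.
Qed.

Lemma homf_lin (c : 'I_n.+1 -> F) : homf 1 (fun y => \sum_(l < n.+1) c l * hat y l).
Proof.
exists [seq (c l, [:: l]) | l <- enum 'I_n.+1]; split.
  by rewrite all_map; apply/allP.
move=> y; rewrite big_map big_enum /=; apply: eq_bigr => l _.
by rewrite /mon big_seq1.
Qed.

Lemma homf_exp d g m : homf d g -> homf (d * m) (fun y => g y ^+ m).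
Proof.
move=> H; elim: m => [|m IH].
  by rewrite muln0; apply: homf_ext homf_one0 => y; rewrite expr0.
rewrite mulnS; apply: homf_ext (homf_mul H IH) => y; by rewrite exprS.
Qed.

Lemma homf_prod (I : Type) (r : seq I) d (G : I -> 'rV[F]_n -> F) :
  (forall i, homf d (G i)) -> homf (d * size r) (fun y => \prod_(i <- r) G i y).
Proof.
move=> H; elim: r => [|i r IH].
  by rewrite muln0; apply: homf_ext homf_one0 => y; rewrite big_nil.
rewrite /= mulnS; apply: homf_ext (homf_mul (H i) IH) => y; by rewrite big_cons.
Qed.

Lemma widen_lift (i : 'I_n) : widen_ord (leqnSn n) i = lift ord_max i.
Proof. by apply: val_inj; rewrite /= /bump leqNgt ltn_ord. Qed.

Lemma homf_affine (a : 'rV[F]_n) (b : F) : homf 1 (fun y => dotv a y + b).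
Proof.
pose c (l : 'I_n.+1) := if unlift ord_max l is Some i then a 0 i else b.
apply: homf_ext (homf_lin c) => y.
rewrite big_ord_recr /= /c /hat unlift_none mulr1; congr (_ + _).
by apply: eq_bigr => i _; rewrite widen_lift liftK.
Qed.

Lemma homf_const1 : homf 1 (fun _ => 1).
Proof.
apply: homf_ext (homf_affine 0 1) => y.
by rewrite /dotv big1 ?add0r // => i _; rewrite mxE mul0r.
Qed.

Lemma homf_pad d1 d g : (d1 <= d)%N -> homf d1 g -> homf d g.
Proof.
move=> le H; have H1 := homf_exp (d - d1) homf_const1.
have := homf_mul H H1; rewrite mul1n subnKC //.
by apply: homf_ext => y; rewrite expr1n mulr1.
Qed.

End Poly.

Section Rank.
Variables (F : finFieldType) (n : nat).

Definition Et d := {t : d.-tuple 'I_n.+1 | sorted leq (map val t)}.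
Definition leo (a b : 'I_n.+1) := (a <= b)%N.

Lemma card_Et d : #|{: Et d}| = 'C(d + n, d).
Proof. by rewrite card_sig -card_sorted_tuples cardsE. Qed.

Lemma homf_coef d (g : 'rV[F]_n -> F) : homf d g ->
  exists c : Et d -> F, forall y, g y = \sum_(e : Et d) c e * mon (tval (val e)) y.
Proof.
move=> [L [HL E]].
exists (fun e => \sum_(cs <- L | sort leo cs.2 == tval (val e)) cs.1) => y.
rewrite E; symmetry.
under eq_bigr do rewrite big_distrl big_mkcond /=.
rewrite exchange_big /= big_seq [RHS]big_seq; apply: eq_bigr => cs hcs.
have hsz : size (sort leo cs.2) == d by rewrite size_sort (eqP (allP HL _ hcs)).
have hso : sorted leq (map val (Tuple hsz)).
  rewrite /= sorted_map; apply: sort_sorted => a b; exact: leq_total.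
pose e0 : Et d := exist _ (Tuple hsz) hso.
rewrite (bigD1 e0) //= eqxx big1 ?addr0.
  congr (_ * _); apply: perm_big; by rewrite perm_sort.
move=> e ne; case: ifP => // /eqP he; case/eqP: ne.
by apply: val_inj; apply: val_inj; rewrite /= -he.
Qed.

Lemma tri_rank d m (y : 'I_m -> 'rV[F]_n) (f : 'I_m -> 'rV[F]_n -> F) :
  (forall s, homf d (f s)) -> (forall s, f s (y s) != 0) ->
  (forall s t : 'I_m, (t < s)%N -> f s (y t) = 0) -> (m <= 'C(d + n, d))%N.
Proof.
move=> Hh Hd Ht.
have hc s := constructive_indefinite_description _ (homf_coef (Hh s)).
pose c s := proj1_sig (hc s).
have Ec s y0 : f s y0 = \sum_(e : Et d) c s e * mon (tval (val e)) y0.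
  exact: (proj2_sig (hc s)).
pose Mon : 'M[F]_(m, #|{: Et d}|) := \matrix_(t, e) mon (tval (val (enum_val e))) (y t).
pose Cm : 'M[F]_(#|{: Et d}|, m) := \matrix_(e, s) c s (enum_val e).
have EM t s : (Mon *m Cm) t s = f s (y t).
  rewrite mxE Ec (big_enum_val (fun e => c s e * mon (tval (val e)) (y t))).
  by apply: eq_bigr => e _; rewrite !mxE mulrC.
have tr : is_trig_mx (Mon *m Cm).
  by apply/is_trig_mxP => i j lij; rewrite EM Ht.
have un : Mon *m Cm \in unitmx.
  rewrite unitmxE det_trig // unitfE; apply/prodf_neq0 => i _; by rewrite EM.
have := mulmx_max_rank Mon Cm; rewrite mxrank_unit // => H.
by rewrite -card_Et.
Qed.
End Rank.

Section Comb.
Variables (F : finFieldType) (n : nat).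

Definition noc j (C : {set 'rV[F]_n}) :=
  forall x : 'I_j.+1 -> 'rV[F]_n, (forall i, x i \in C) -> ~ right_corner x.

Lemma dotvC (u v : 'rV[F]_n) : dotv u v = dotv v u.
Proof. by apply: eq_bigr => i _; rewrite mulrC. Qed.

Lemma dotv0 (u : 'rV[F]_n) : dotv u 0 = 0.
Proof. by rewrite /dotv big1 // => i _; rewrite mxE mulr0. Qed.

Lemma dotvB (u v w : 'rV[F]_n) : dotv u (v - w) = dotv u v + - dotv u w.
Proof.
rewrite /dotv -sumrN -big_split /=; apply: eq_bigr => i _.
by rewrite !mxE mulrBr.
Qed.

Lemma q_gt1 : (1 < #|F|)%N.
Proof. exact: finNzRing_gt1. Qed.

Lemma expf_pred (a : F) : a != 0 -> a ^+ #|F|.-1 = 1.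
Proof.
move=> a0; have := expf_card a; rewrite -(prednK (ltnW q_gt1)) exprS => h.
by apply: (mulfI a0); rewrite mulr1.
Qed.

Definition fz j (x : 'I_j.+1 -> 'rV[F]_n) (y : 'rV[F]_n) : F :=
  \prod_(i <- enum 'I_j)
    (1 - dotv (x (widen_ord (leqnSn j) i) - x ord_max) (y - x ord_max) ^+ #|F|.-1).

Lemma fz_homf j x : homf (j * #|F|.-1) (@fz j x).
Proof.
rewrite -{1}(size_enum_ord j) mulnC; apply: homf_prod => i.
apply: homf_add.
  have := homf_exp #|F|.-1 (homf_const1 F n); rewrite mul1n.
  by apply: homf_ext => y; rewrite expr1n.
have := homf_exp #|F|.-1 (homf_affine (x (widen_ord (leqnSn j) i) - x ord_max)
   (- dotv (x (widen_ord (leqnSn j) i) - x ord_max) (x ord_max))); rewrite mul1n.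
move/(homf_scale (-1)).
by apply: homf_ext => y; rewrite mulN1r dotvB.
Qed.

Lemma fz_apex j x : @fz j x (x ord_max) = 1.
Proof.
rewrite /fz big1 // => i _; rewrite subrr dotv0 expr0n.
have := q_gt1; case: #|F| => [|[|q]] //= _; by rewrite subr0.
Qed.

Lemma fz_vanish j (A : {set 'rV[F]_n}) (x : 'I_j.+1 -> 'rV[F]_n) w :
  noc j.+1 A -> (forall i, x i \in A) -> right_corner x -> w \in A ->
  (forall i, x i != w) -> @fz j x w = 0.
Proof.
move=> nA xA [xinj xorth] wA xw.
apply/eqP; apply: contraT => nz.
set z := x ord_max.
have hd (i : 'I_j) : dotv (x (widen_ord (leqnSn j) i) - z) (w - z) = 0.
  apply/eqP; apply: contraT => d0.
  move: nz; rewrite /fz (bigD1_seq i) ?mem_enum ?enum_uniq //= expf_pred //.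
  by rewrite subrr mul0r eqxx.
pose x' (i : 'I_j.+2) := if val i == j then w else x (inord (minn i j)).
have XI (a b : nat) : (a <= j)%N -> (b <= j)%N -> x (inord a) = x (inord b) -> a = b.
  move=> ha hb /xinj /(congr1 val); by rewrite /= !inordK.
have Xw (i : 'I_j) : x (inord i) = x (widen_ord (leqnSn j) i).
  by congr x; apply: val_inj; rewrite /= inordK // ltnS ltnW.
have Xz : x (inord j) = z by congr x; apply: val_inj; rewrite /= inordK.
suff : False by [].
apply: (nA x').
  by move=> i; rewrite /x'; case: ifP.
split.
  move=> a b; rewrite /x'.
  case: eqP => ha; case: eqP => hb.
  - by move=> _; apply: val_inj; rewrite ha hb.
  - by move=> e; case/negP: (xw (inord (minn b j))); rewrite e.
  - by move=> e; case/negP: (xw (inord (minn a j))); rewrite e.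
  move/XI => h; apply: val_inj; move: (ltn_ord a) (ltn_ord b) => la lb.
  have {}h := h (geq_minr _ _) (geq_minr _ _).
  have ha2 : nat_of_ord a <> j := ha; have hb2 : nat_of_ord b <> j := hb.
  change (nat_of_ord a = nat_of_ord b); lia.
move=> a b ab.
have xm : x' ord_max = z.
  rewrite /x'; case: eqP => [e|_].
    by have e2 : (j.+1 = j)%N := e; lia.
  rewrite -Xz; congr (x (inord _)); rewrite /=; lia.
rewrite xm.
have xa (i : 'I_j.+1) (h : (i < j)%N) :
    x' (widen_ord (leqnSn j.+1) i) = x (widen_ord (leqnSn j) (Ordinal h)).
  by rewrite /x' /= (ltn_eqF h) (minn_idPl (ltnW h)) -(Xw (Ordinal h)).
have xj (i : 'I_j.+1) : val i = j -> x' (widen_ord (leqnSn j.+1) i) = w.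
  by move=> h; rewrite /x' /= h eqxx.
have [la|ea] : (a < j)%N \/ nat_of_ord a = j by move: (ltn_ord a); lia.
  have [lb|eb] : (b < j)%N \/ nat_of_ord b = j by move: (ltn_ord b); lia.
    rewrite (xa _ la) (xa _ lb); apply: xorth.
    by apply: contra ab => /eqP [e]; apply/eqP/val_inj.
  by rewrite (xa _ la) (xj _ eb) hd.
have [lb|eb] : (b < j)%N \/ nat_of_ord b = j by move: (ltn_ord b); lia.
  by rewrite (xj _ ea) (xa _ lb) dotvC hd.
by case/eqP: ab; apply: val_inj; change (nat_of_ord a = nat_of_ord b); rewrite ea eb.
Qed.
End Comb.

Section Comb2.
Variables (F : finFieldType) (n : nat).

Lemma noc_base (C : {set 'rV[F]_n}) : noc 0.+1 C -> (#|C| <= 1)%N.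
Proof.
move=> nC; rewrite leqNgt; apply/negP => /card_gt1P [a [b [aC bC ab]]].
pose x (i : 'I_2) := if val i == 0%N then a else b.
apply: (nC x); first by move=> i; rewrite /x; case: ifP.
split; last by move=> i1 i2; rewrite (ord1 i1) (ord1 i2) eqxx.
move=> i1 i2; rewrite /x; case: eqP => h1; case: eqP => h2.
- by move=> _; apply: val_inj; rewrite /= h1 h2.
- by move=> e; rewrite e eqxx in ab.
- by move=> e; rewrite e eqxx in ab.
move=> _; apply: val_inj; move: (ltn_ord i1) (ltn_ord i2).
have h1' : nat_of_ord i1 <> 0%N := h1; have h2' : nat_of_ord i2 <> 0%N := h2.
change (nat_of_ord i1 < 2 -> nat_of_ord i2 < 2 -> nat_of_ord i1 = nat_of_ord i2)%N.
lia.
Qed.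

Lemma greedy j (A : {set 'rV[F]_n}) (hA : noc j.+2 A) N :
  forall C : {set 'rV[F]_n}, C \subset A -> (#|C| <= N)%N ->
  exists m (y : 'I_m -> 'rV[F]_n) (f : 'I_m -> 'rV[F]_n -> F),
  [/\ forall s, homf (j.+1 * #|F|.-1) (f s), forall s, f s (y s) != 0,
      forall s t : 'I_m, (t < s)%N -> f s (y t) = 0,
      forall s w, w \in A -> w \notin C -> f s w = 0 &
      exists2 C' : {set 'rV[F]_n}, noc j.+1 C' & (#|C| <= m + #|C'|)%N].
Proof.
elim: N => [|N IH] C sub hC; case: (classic (noc j.+1 C)) => [nc|c].
- exists 0%N, (fun _ => 0), (fun _ _ => 0); split; try by case.
  by exists C.
- exfalso; apply: c => x hx; move: (hx ord_max).
  have -> : C = set0 by apply/eqP; rewrite -cards_eq0 -leqn0.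
  by rewrite inE.
- exists 0%N, (fun _ => 0), (fun _ _ => 0); split; try by case.
  by exists C.
have [x [hxC hcx]] : exists x : 'I_j.+2 -> 'rV[F]_n, (forall i, x i \in C) /\ right_corner x.
  apply NNPP; intro H; apply: c => x hx hr; apply: H; exists x; by split.
set z := x ord_max.
have zC : z \in C := hxC ord_max.
have sub' : C :\ z \subset A by apply: subset_trans sub; apply: subD1set.
have hC' : (#|C :\ z| <= N)%N by move: hC; rewrite (cardsD1 z C) zC.
have [m [y [f [H1 H2 H3 H4 [C' nC' H5]]]]] := IH _ sub' hC'.
exists m.+1.
exists (fun s => if unlift ord0 s is Some s' then y s' else z).
exists (fun s => if unlift ord0 s is Some s' then f s' else @fz F n j.+1 x).
split.
- by move=> s; case: unlift => [s'|]; [exact: H1 | exact: fz_homf].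
- move=> s; case: (unliftP ord0 s) => [s'|] _ //.
  by rewrite fz_apex oner_eq0.
- move=> s t; case: (unliftP ord0 s) => [s' es|es]; last by rewrite es.
  case: (unliftP ord0 t) => [t' et|et].
    by rewrite es et !lift0 ltnS; exact: H3.
  move=> _; apply: H4; first by apply: (subsetP sub).
  by rewrite !inE eqxx.
- move=> s w wA wC; case: unlift => [s'|].
    by apply: H4 => //; rewrite !inE negb_and wC orbT.
  apply: (fz_vanish (A := A)) => //.
    by move=> i; apply: (subsetP sub).
  by move=> i; apply: contra wC => /eqP <-.
exists C' => //; rewrite (cardsD1 z C) zC add1n addSn ltnS; exact: H5.
Qed.
End Comb2.

Lemma bound (F : finFieldType) (n k : nat) :
  forall j, (j < k)%N -> forall C : {set 'rV[F]_n}, noc j.+1 C ->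
  (#|C| <= 1 + j * 'C((k.-1 * #|F|.-1) + n, k.-1 * #|F|.-1))%N.
Proof.
elim=> [|j IH] jk C nC.
  by rewrite mul0n addn0; exact: noc_base.
have [m [y [f [H1 H2 H3 H4 [C' nC' H5]]]]] := greedy nC (subxx C) (leqnn #|C|).
have mD : (m <= 'C((k.-1 * #|F|.-1) + n, k.-1 * #|F|.-1))%N.
  apply: (tri_rank (y := y) (f := f)) => // s.
  apply: homf_pad (H1 s); rewrite leq_mul2r; apply/orP; right; lia.
have := IH (ltnW jk) _ nC'; move: H5 mD; rewrite mulSn; lia.
Qed.

Theorem theorem2 (F : finFieldType) (p r n k : nat)
  (hp : prime p) (hchar : p \in [pchar F]) (hq : #|F| = (p ^ r)%N)
  (hk : (2 <= k)%N) (hpk : (k < p)%N)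
  (A : {set 'rV[F]_n})
  (hA : ((k + 1) * 'C(n + (k - 1) * #|F|, (k - 1) * (#|F| - 1)) < #|A|)%N) :
  exists x : 'I_k.+1 -> 'rV[F]_n, (forall i, x i \in A) /\ right_corner x.
Proof.
apply NNPP; intro H.
have nA : noc k.-1.+1 A.
  rewrite prednK ?(leq_trans _ hk) //.
  move=> x hx hr; apply: H; exists x; by split.
have kk : (k.-1 < k)%N by lia.
have := bound kk nA.
set B := 'C(_, _).
have BB : (B <= 'C(n + (k - 1) * #|F|, (k - 1) * (#|F| - 1)))%N.
  rewrite /B -!subn1 addnC; apply: leq_bin2l; rewrite leq_add2l leq_mul2l.
  by rewrite leq_subr orbT.
have B1 : (0 < 'C(n + (k - 1) * #|F|, (k - 1) * (#|F| - 1)))%N.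
  rewrite bin_gt0; apply: leq_trans (leq_addl _ _); rewrite leq_mul2l.
  by rewrite leq_subr orbT.
move: hA BB B1; set Cb := 'C(_, _); move=> hA BB B1 hb.
have : (k.-1 * B <= k.-1 * Cb)%N by rewrite leq_mul2l BB orbT.
nia.
Qed.
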